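(* Let $\nu$ be a probability measure on $\mathbb R$ with finite moments of all orders, and let $\{P_n\}_{n\ge0}$ be the monic orthogonal polynomials of $\nu$, satisfying $P_0=1$, $P_{-1}=0$ and $P_{n+1}(x)=(x-\alpha_{n+1})P_n(x)-\beta_nP_{n-1}(x)$ for $n\ge0$, with all $\beta_n\ge0$. Let $H(x,z)=\sum_{n\ge0}P_n(x)z^n$. (1) $H(x,z)=\frac{1}{u(z)(f(z)-x)}$ for some $u,f$ such that $u$ and $uf$ are formal power series with $u\in\mathcal P_{0,1}$ and $(uf)(0)=1$ if and only if there exist $\alpha,\alpha',\beta,\beta'$ with $\beta\ge0$, $\beta-\beta'\ge0$ such that $\alpha_n=\alpha-\delta_{n1}\alpha'$ and $\beta_n=\beta-\delta_{n1}\beta'$ for all $n\ge1$. (2) In this case $f=K_\nu\circ u$. (3) In this case, with $Q_n(x)=U_n(x-\alpha,\beta)$, one has $P_0=Q_0$, $P_1=Q_1+\alpha'Q_0$, and $P_n=Q_n+\alpha'Q_{n-1}+\beta'Q_{n-2}$ for $n>1$.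
   Context: $\mathcal P_{0,1}$ denotes formal power series $u(z)$ with $u(0)=0$, $u'(0)=1$. $G_\nu(z)=\sum_{n\ge0}m_n(\nu)z^{-(n+1)}$ is the Cauchy transform of $\nu$ ($m_n$ its moments) and $K_\nu$ its inverse under composition (a series $\frac1z+\sum_{n\ge1}c_nz^{n-1}$). Chebyshev polynomials of the second kind: $U_n(2\cos\theta)=\frac{\sin(n+1)\theta}{\sin\theta}$, $U_n(x,t)=t^{n/2}U_n(x/\sqrt t)$, and $U_n(x-\alpha,\beta)$ means $U_n(\cdot,\beta)$ evaluated at $x-\alpha$; these satisfy $Q_{n+1}=(x-\alpha)Q_n-\beta Q_{n-1}$. *)

(* Defs.v *)
From HB Require Import structures.
From mathcomp Require Import all_boot all_order all_algebra.
From mathcomp Require Import all_classical all_reals all_analysis.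
Set Implicit Arguments. Unset Strict Implicit. Unset Printing Implicit Defensive.
Import Order.TTheory GRing.Theory Num.Theory.
Local Open Scope ring_scope.

Section Series.
Variable K : comNzRingType.
Definition fps := nat -> K.
Definition sone : fps := fun n => (n == 0%N)%:R.
Definition sX : fps := fun n => (n == 1%N)%:R.
Definition smul (a b : fps) : fps :=
  fun n => \sum_(i < n.+1) a i * b (n - i)%N.
Definition sadd (a b : fps) : fps := fun n => a n + b n.
Definition sscale (x : K) (a : fps) : fps := fun n => x * a n.
Definition spow (a : fps) (k : nat) : fps := iter k (smul a) sone.
(* composition a(b(z)); meaningful when b 0 = 0 (then it is the usual
   formal composition, since b^k has no terms of degree < k) *)
Definition scomp (a b : fps) : fps :=
  fun n => \sum_(k < n.+1) a k * spow b k n.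
End Series.

Section OP.
Variable R : realType.

Fixpoint OPpair (alpha beta : nat -> R) (n : nat) : {poly R} * {poly R} :=
  (* returns (P_n, P_{n-1}) *)
  match n with
  | 0%N => (1, 0)
  | n'.+1 => let: (p, q) := OPpair alpha beta n' in
             (('X - (alpha n)%:P) * p - beta n' *: q, p)
  end.
Definition OP (alpha beta : nat -> R) (n : nat) : {poly R} := (OPpair alpha beta n).1.

(* H(x,z) = sum_n P_n(x) z^n, a fps in z with coefficients in R[x] *)
Definition Hgen (alpha beta : nat -> R) : fps {poly R} := OP alpha beta.

(* Chebyshev polynomials of the second kind in two variables,
   U_n(x,t) = t^{n/2} U_n(x/sqrt t), given as polynomials in x with
   parameter t by U_0 = 1, U_1 = x, U_{n+1} = x U_n - t U_{n-1}. *)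
Fixpoint Upair (t : R) (n : nat) : {poly R} * {poly R} :=
  match n with
  | 0%N => (1, 0)
  | n'.+1 => let: (p, q) := Upair t n' in ('X * p - t *: q, p)
  end.
Definition Ucheb2 (t : R) (n : nat) : {poly R} := (Upair t n).1.
Definition Ushift (a t : R) (n : nat) : {poly R} := Ucheb2 t n \Po ('X - a%:P).

Definition moment (P : probability R R) (n : nat) : R :=
  fine (\int[P]_x ((x ^+ n)%:E))%E.

(* Series of K_nu:  K_nu(z) = 1/z + sum_{n>=1} c_n z^{n-1} = kser c (z) / z *)
Definition kser (c : nat -> R) : fps R := fun n => if n is 0%N then 1 else c n.

(* Ghat(t) = sum_n m_n t^{n+1}, so that G_nu(w) = Ghat(1/w). *)
Definition Ghat (m : nat -> R) : fps R := fun n => if n is n'.+1 then m n' else 0.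

(* c are the coefficients of the compositional inverse K_nu of G_nu:
   G_nu(K_nu(z)) = z.  Since 1/K_nu(z) = z * psi(z) with psi = 1/kser c,
   this reads Ghat(z psi(z)) = z. *)
Definition is_Kcoeffs (m c : nat -> R) : Prop :=
  exists psi : fps R,
    smul (kser c) psi = sone R /\ scomp (Ghat m) (smul (sX R) psi) = sX R.

(* H(x,z) = 1/(u(z)(f(z) - x)) with g = u f:   H * (g - u x) = 1
   in R[x][[z]]. *)
Definition Hform (H : fps {poly R}) (u g : fps R) : Prop :=
  smul H (fun n => (g n)%:P - u n *: 'X) = sone {poly R}.

End OP.

(* Main.v *)
Require Import Defs.
From HB Require Import structures.
From mathcomp Require Import all_boot all_order all_algebra.
From mathcomp Require Import all_classical all_reals all_analysis.
From mathcomp Require Import ring lra zify.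
Import Order.TTheory GRing.Theory Num.Theory.
Set Implicit Arguments. Unset Strict Implicit. Unset Printing Implicit Defensive.
Local Open Scope ring_scope.

Section FpsRing.
Variable K : comNzRingType.
Implicit Types a b c : fps K.

Definition tr (N : nat) (a : fps K) : {poly K} := \poly_(i < N) a i.

Lemma coef_tr N a i : (tr N a)`_i = if (i < N)%N then a i else 0.
Proof. by rewrite coef_poly. Qed.

Lemma size_tr N a : (size (tr N a) <= N)%N.
Proof. exact: size_poly. Qed.

Lemma take_polyMl N (p q : {poly K}) :
  take_poly N (take_poly N p * q) = take_poly N (p * q).
Proof.
apply/polyP => i; rewrite !coef_take_poly; case: ifP => // iN.
rewrite !coefM; apply: eq_bigr => j _; rewrite coef_take_poly.
by rewrite (leq_ltn_trans _ iN) // -ltnS.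
Qed.

Lemma take_polyMr N (p q : {poly K}) :
  take_poly N (p * take_poly N q) = take_poly N (p * q).
Proof. by rewrite mulrC take_polyMl mulrC. Qed.

Lemma take_take N (p : {poly K}) : take_poly N (take_poly N p) = take_poly N p.
Proof. by rewrite take_poly_id // size_take_poly. Qed.

Lemma take_tr N a : take_poly N (tr N a) = tr N a.
Proof. by rewrite take_poly_id // size_tr. Qed.

Lemma smulE N a b k : (k < N)%N -> smul a b k = (tr N a * tr N b)`_k.
Proof.
move=> kN; rewrite /smul coefM; apply: eq_bigr => -[j hj] _ /=.
have jN : (j < N)%N by apply: leq_ltn_trans kN; rewrite -ltnS.
have jN' : (k - j < N)%N by apply: leq_ltn_trans kN; apply: leq_subr.
by rewrite !coef_tr jN jN'.
Qed.

Lemma tr_smul N a b : tr N (smul a b) = take_poly N (tr N a * tr N b).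
Proof.
apply/polyP => i; rewrite coef_tr coef_take_poly; case: ifP => // iN.
exact: smulE.
Qed.

Lemma tr_sadd N a b : tr N (sadd a b) = tr N a + tr N b.
Proof. by apply/polyP => i; rewrite coefD !coef_tr; case: ifP; rewrite ?addr0. Qed.

Lemma tr_sone N : tr N (sone K) = take_poly N 1.
Proof. by apply/polyP => i; rewrite coef_tr coef_take_poly coef1. Qed.

Lemma fps_eq a b : (forall N, tr N a = tr N b) -> a = b.
Proof.
move=> h; apply: funext => n; have := congr1 (fun p : {poly K} => p`_n) (h n.+1).
by rewrite !coef_tr ltnSn.
Qed.

Lemma smulA : associative (@smul K).
Proof.
move=> a b c; apply: fps_eq => N; rewrite !tr_smul take_polyMl take_polyMr.
by rewrite mulrA.
Qed.

Lemma smulC : commutative (@smul K).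
Proof. by move=> a b; apply: fps_eq => N; rewrite !tr_smul mulrC. Qed.

Lemma smul1 : left_id (sone K) (@smul K).
Proof.
by move=> a; apply: fps_eq => N; rewrite tr_smul tr_sone take_polyMl mul1r take_tr.
Qed.

Lemma smulDl : left_distributive (@smul K) (@sadd K).
Proof.
move=> a b c; apply: fps_eq => N; rewrite tr_sadd !tr_smul tr_sadd mulrDl.
by rewrite take_polyD.
Qed.

Definition szero : fps K := fun _ => 0.
Definition sopp a : fps K := fun n => - a n.

Lemma saddA : associative (@sadd K).
Proof. by move=> a b c; apply: funext => n; rewrite /sadd addrA. Qed.
Lemma saddC : commutative (@sadd K).
Proof. by move=> a b; apply: funext => n; rewrite /sadd addrC. Qed.
Lemma sadd0 : left_id szero (@sadd K).
Proof. by move=> a; apply: funext => n; rewrite /sadd /szero add0r. Qed.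
Lemma saddN : left_inverse szero sopp (@sadd K).
Proof. by move=> a; apply: funext => n; rewrite /sadd /szero /sopp addNr. Qed.

Lemma sone_neq0 : sone K != szero.
Proof.
apply/eqP => h; have := congr1 (fun f => f 0%N) h; rewrite /sone /szero /=.
by move/eqP; rewrite oner_eq0.
Qed.

HB.instance Definition _ := gen_eqMixin (fps K).
HB.instance Definition _ := gen_choiceMixin (fps K).
HB.instance Definition _ := GRing.isZmodule.Build (fps K) saddA saddC sadd0 saddN.
HB.instance Definition _ := GRing.Zmodule_isComNzRing.Build (fps K) smulA smulC smul1 smulDl sone_neq0.

End FpsRing.


Section Comp.
Variable K : comNzRingType.
Implicit Types a b c : fps K.

Lemma spowE b k : spow b k = b ^+ k.
Proof. elim: k => [|k IH] //; by rewrite /spow iterS -/(spow b k) IH exprS. Qed.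

Lemma oneE n : (1 : fps K) n = (n == 0%N)%:R.
Proof. by []. Qed.

Lemma tr_one N : tr N (1 : fps K) = take_poly N 1.
Proof. exact: tr_sone. Qed.

Lemma tr_mul N a b : tr N (a * b) = take_poly N (tr N a * tr N b).
Proof. exact: tr_smul. Qed.

Lemma tr_exp N b k : tr N (b ^+ k) = take_poly N (tr N b ^+ k).
Proof.
elim: k => [|k IH]; first by rewrite !expr0 tr_one.
by rewrite !exprS tr_mul IH take_polyMr.
Qed.

Lemma tr_sX N : tr N (sX K) = take_poly N 'X.
Proof. by apply/polyP => i; rewrite coef_tr coef_take_poly coefX. Qed.

Lemma tr0 N b : b 0%N = 0 -> (tr N b)`_0 = 0.
Proof. by move=> h; rewrite coef_tr; case: ifP. Qed.

Lemma coef_pow0 (p : {poly K}) k i : p`_0 = 0 -> (i < k)%N -> (p ^+ k)`_i = 0.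
Proof.
move=> p0; elim: k i => [//|k IH] i ik.
rewrite exprS coefM big1 // => -[j hj] _ /=.
case: j hj => [|j] hj; first by rewrite p0 mul0r.
by rewrite IH ?mulr0 //; lia.
Qed.

Lemma comp_Xn (q : {poly K}) k : 'X^k \Po q = q ^+ k.
Proof.
elim: k => [|k IH]; first by rewrite !expr0 comp_polyC.
by rewrite !exprS comp_polyM comp_polyX IH.
Qed.

Lemma comp_sum N (c : nat -> K) (q : {poly K}) :
  (\sum_(k < N) c k *: 'X^k) \Po q = \sum_(k < N) c k *: q ^+ k.
Proof.
elim/big_rec2: _ => [|k x y _ h]; first by rewrite comp_poly0.
by rewrite comp_polyD comp_polyZ comp_Xn h.
Qed.

Lemma tr_scomp N a b : b 0%N = 0 ->
  tr N (scomp a b) = take_poly N (tr N a \Po tr N b).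
Proof.
move=> b0; apply/polyP => i; rewrite coef_tr coef_take_poly; case: ifP => // iN.
rewrite /scomp {2}/tr poly_def comp_sum coef_sum.
rewrite (big_ord_widen N (fun k => a k * spow b k i) iN).
rewrite big_mkcond /=; apply: eq_bigr => -[k hk] _ /=; rewrite coefZ.
case: ifP => ki.
  rewrite spowE; congr (_ * _).
  by have := coef_tr N (b ^+ k) i; rewrite iN => <-; rewrite tr_exp coef_take_poly iN.
by rewrite coef_pow0 ?mulr0 ?tr0 //; lia.
Qed.

Lemma take_comp_r N (p q : {poly K}) :
  take_poly N (p \Po take_poly N q) = take_poly N (p \Po q).
Proof.
have e : forall k, take_poly N (take_poly N q ^+ k) = take_poly N (q ^+ k).
  elim=> [|k IH]; first by rewrite !expr0.
  by rewrite !exprS -take_polyMr IH take_polyMr take_polyMl.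
by rewrite !comp_polyE !take_poly_sum; apply: eq_bigr => i _; rewrite !take_polyZ e.
Qed.

Lemma take_comp_l N (p q : {poly K}) : q`_0 = 0 ->
  take_poly N (take_poly N p \Po q) = take_poly N (p \Po q).
Proof.
move=> q0.
have hq : q = drop_poly 1 q * 'X.
  rewrite -[in LHS](poly_take_drop 1 q) expr1.
  suff -> : take_poly 1 q = 0 by rewrite add0r.
  by apply/polyP => i; rewrite coef_take_poly coef0; case: i => [|i] //=.
rewrite -[in RHS](poly_take_drop N p) comp_polyD take_polyD comp_polyM comp_Xn.
rewrite [q in _ * q ^+ _]hq exprMn mulrA take_polyMXn_0 addr0.
by [].
Qed.

Lemma fps_eqT a b : (forall N, tr N a = tr N b) -> a = b.
Proof. exact: fps_eq. Qed.

Lemma scomp0 a b : a 0%N = 0 -> scomp a b 0%N = 0.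
Proof. by move=> a0; rewrite /scomp big_ord1 a0 mul0r. Qed.

Lemma scompM a1 a2 b : b 0%N = 0 -> scomp (a1 * a2) b = scomp a1 b * scomp a2 b.
Proof.
move=> b0; apply: fps_eq => N.
have tb0 := tr0 N b0.
rewrite tr_mul !tr_scomp // tr_mul take_comp_l // comp_polyM.
by rewrite take_polyMl take_polyMr.
Qed.

Lemma scompD a1 a2 b : b 0%N = 0 -> scomp (a1 + a2) b = scomp a1 b + scomp a2 b.
Proof.
move=> b0; apply: fps_eq => N.
by rewrite tr_sadd !tr_scomp // tr_sadd comp_polyD take_polyD.
Qed.

Lemma scomp1 b : b 0%N = 0 -> scomp (1 : fps K) b = 1.
Proof.
move=> b0; apply: fps_eq => N.
by rewrite tr_scomp // tr_one take_comp_l ?tr0 // comp_polyC.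
Qed.

Lemma scompX b : b 0%N = 0 -> scomp (sX K) b = b.
Proof.
move=> b0; apply: fps_eq => N.
by rewrite tr_scomp // tr_sX take_comp_l ?tr0 // comp_polyX take_tr.
Qed.

Lemma scomp_X a : scomp a (sX K) = a.
Proof.
apply: fps_eq => N.
by rewrite tr_scomp // tr_sX take_comp_r comp_polyXr take_tr.
Qed.

Lemma scompA a b c : b 0%N = 0 -> c 0%N = 0 ->
  scomp (scomp a b) c = scomp a (scomp b c).
Proof.
move=> b0 c0; apply: fps_eq => N.
have tc0 := tr0 N c0.
rewrite !tr_scomp //; last exact: scomp0.
by rewrite take_comp_l // take_comp_r comp_polyA.
Qed.

End Comp.

Section Ser.
Variable K : comNzRingType.
Implicit Types a b c : fps K.

Lemma mulE a b n : (a * b) n = \sum_(i < n.+1) a i * b (n - i)%N.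
Proof. by []. Qed.
Lemma addE a b n : (a + b) n = a n + b n.
Proof. by []. Qed.
Lemma oppE a n : (- a) n = - a n.
Proof. by []. Qed.
Lemma subE a b n : (a - b) n = a n - b n.
Proof. by []. Qed.

Definition ordge a m := forall j, (j < m)%N -> a j = 0.

Lemma ordgeM a b p q : ordge a p -> ordge b q -> ordge (a * b) (p + q).
Proof.
move=> ha hb j hj; rewrite mulE big1 // => -[i hi] _ /=.
case: (ltnP i p) => ip; first by rewrite ha ?mul0r.
by rewrite hb ?mulr0 //; lia.
Qed.

Lemma ordgeD a b p : ordge a p -> ordge b p -> ordge (a + b) p.
Proof. by move=> ha hb j hj; rewrite addE ha ?hb ?addr0. Qed.

Lemma ordgeW a p q : (p <= q)%N -> ordge a q -> ordge a p.
Proof. move=> pq h j hj; apply: h; lia. Qed.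

Lemma ordge_exp a k : ordge a 1 -> ordge (a ^+ k) k.
Proof.
move=> ha; elim: k => [|k IH]; first by move=> j.
by rewrite exprS; apply: (ordgeM ha IH).
Qed.

Lemma dep_pow a b n k : a 0%N = 0 -> b 0%N = 0 ->
  (forall j, (j < n)%N -> a j = b j) ->
  ordge (a ^+ k.+1 - b ^+ k.+1) (n + k).
Proof.
move=> a0 b0 hab; elim: k => [|k IH].
  by move=> j hj; rewrite !expr1 subE hab ?subrr //; lia.
have -> : a ^+ k.+2 - b ^+ k.+2 = a * (a ^+ k.+1 - b ^+ k.+1) + (a - b) * b ^+ k.+1.
  by rewrite !exprS; ring.
have a1 : ordge a 1 by move=> j; case: j.
have b1 : ordge b 1 by move=> j; case: j.
apply: ordgeD.
  by apply: (ordgeW _ (ordgeM a1 IH)); lia.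
have hd : ordge (a - b) n by move=> j hj; rewrite subE hab ?subrr.
exact: (ordgeM hd (ordge_exp (k := k.+1) b1)).
Qed.

Lemma dep_pow_coef a b n k : a 0%N = 0 -> b 0%N = 0 ->
  (forall j, (j < n)%N -> a j = b j) -> (a ^+ k.+2) n = (b ^+ k.+2) n.
Proof.
move=> a0 b0 hab; apply/eqP; rewrite -subr_eq0 -subE.
by apply/eqP; apply: (dep_pow (k := k.+1) a0 b0 hab); lia.
Qed.

Definition sC (x : K) : fps K := fun n => if n is 0%N then x else 0.
Definition sh a : fps K := fun n => if n is n'.+1 then a n' else 0.

Lemma sCM x a n : (sC x * a) n = x * a n.
Proof.
rewrite mulE big_ord_recl /= subn0 big1 ?addr0 // => i _.
by rewrite /sC /= mul0r.
Qed.

Lemma sC1 : sC 1 = 1.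
Proof. by apply: funext => -[|n]. Qed.

Lemma sXM a : sX K * a = sh a.
Proof.
apply: funext => -[|n]; rewrite mulE.
  by rewrite big_ord1 /sX /= mul0r.
rewrite big_ord_recl big_ord_recl /= big1 ?addr0.
  by rewrite /bump !leq0n !add1n /sX /= mul0r add0r mul1r subSS subn0.
by move=> i _; rewrite /bump !leq0n !add1n /sX /= mul0r.
Qed.

Lemma sXMS a n : (sX K * a) n.+1 = a n.
Proof. by rewrite sXM. Qed.

Lemma sX_cancel a b : sX K * a = sX K * b -> a = b.
Proof.
move=> h; apply: funext => n.
by have := congr1 (fun f : fps K => f n.+1) h; rewrite /= !sXMS.
Qed.

Section Cov.
Variable step : nat -> (nat -> K) -> K.
Hypothesis step_ext : forall n f g, (forall j, (j < n)%N -> f j = g j) -> step n f = step n g.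
Fixpoint cov N : nat -> K :=
  if N is N'.+1 then fun j => if j == N' then step N' (cov N') else cov N' j
  else fun _ => 0.
Definition crec n := cov n.+1 n.
Lemma cov_crec N j : (j < N)%N -> cov N j = crec j.
Proof.
elim: N j => [//|N IH] j hj /=; case: eqP => [->|ne].
  by rewrite /crec /= eqxx.
by apply: IH; lia.
Qed.
Lemma crecE n : crec n = step n crec.
Proof. by rewrite /crec /= eqxx; apply: step_ext => j hj; apply: cov_crec. Qed.
End Cov.

Definition invstep (p : fps K) n (f : nat -> K) : K :=
  if n is 0%N then 1 else - \sum_(i < n) f i * p (n - i)%N.
Definition sinv (p : fps K) : fps K := crec (invstep p).

Lemma sinvP p : p 0%N = 1 -> sinv p * p = 1.
Proof.
move=> p0.
have E : forall n, sinv p n = invstep p n (sinv p).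
  apply: crecE => -[|n] f g h //=; congr (- _); apply: eq_bigr => i _.
  by rewrite h.
apply: funext => n; rewrite mulE big_ord_recr /= subnn p0 mulr1 E.
case: n => [|n]; first by rewrite big_ord0 add0r.
by rewrite /invstep subrr.
Qed.

Definition cut n (f : nat -> K) : fps K :=
  fun j => if (0 < j)%N && (j < n)%N then f j else 0.

Definition rinvstep (s : fps K) n (f : nat -> K) : K :=
  (n == 1%N)%:R - \sum_(k < n.-1) s k.+2 * ((cut n f) ^+ k.+2) n.
Definition rinv (s : fps K) : fps K := crec (rinvstep s).

Lemma rinvE s n : rinv s n = rinvstep s n (rinv s).
Proof.
apply: crecE => m f g h; rewrite /rinvstep.
suff -> : cut m f = cut m g by [].
by apply: funext => j; rewrite /cut; case: ifP => // /andP[_ /h].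
Qed.

Lemma rinv0 s : rinv s 0%N = 0.
Proof. by rewrite rinvE /rinvstep big_ord0 subr0. Qed.

Lemma rinvP s : s 0%N = 0 -> s 1%N = 1 -> scomp s (rinv s) = sX K.
Proof.
move=> s0 s1; apply: funext => -[|m].
  by rewrite /scomp big_ord1 s0 mul0r.
rewrite /scomp big_ord_recl big_ord_recl.
rewrite [nat_of_ord ord0]/= s0 mul0r add0r !lift0.
under eq_bigr => i _ do rewrite !lift0 spowE.
rewrite spowE expr1 s1 mul1r [rinv s m.+1]rinvE /rinvstep /= addrAC.
rewrite -addrA -sumrB big1 ?addr0 // => i _.
rewrite (@dep_pow_coef (cut m.+1 (rinv s)) (rinv s)) ?subrr ?rinv0 //.
by move=> j hj; rewrite /cut hj andbT; case: j hj => [|j] hj //=; rewrite rinv0.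
Qed.

Definition smap (K' : comNzRingType) (f : {rmorphism K -> K'}) (a : fps K) : fps K' :=
  fun n => f (a n).

Lemma smapM (K' : comNzRingType) (f : {rmorphism K -> K'}) a b :
  smap f (a * b) = smap f a * smap f b.
Proof.
apply: funext => n; change (f (smul a b n) = smul (smap f a) (smap f b) n).
by rewrite /smul rmorph_sum; apply: eq_bigr => i _; rewrite rmorphM.
Qed.

Lemma smap1 (K' : comNzRingType) (f : {rmorphism K -> K'}) :
  smap f 1 = 1.
Proof. by apply: funext => n; rewrite /smap !oneE rmorph_nat. Qed.

End Ser.

Section Integ.
Variable R : realType.
Variable P : probability R R.
Hypothesis hmom : forall n : nat, P.-integrable [set: R] (fun x => (x ^+ n)%:E).

Definition Lm (p : {poly R}) : R := \sum_(i < size p) p`_i * moment P i.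

Lemma int_poly (p : {poly R}) :
  (\int[P]_x ((p.[x])%:E) = (Lm p)%:E)%E.
Proof.
under eq_integral => x _ do rewrite horner_coef -sumEFin.
rewrite integral_sum //; last first.
  move=> i; under eq_fun => x do rewrite EFinM.
  exact: integrableZl.
rewrite /Lm -sumEFin; apply: eq_bigr => i _.
under eq_integral => x _ do rewrite EFinM.
rewrite integralZl // EFinM /moment fineK //.
exact: integrable_fin_num.
Qed.

Lemma moment0 : moment P 0 = 1.
Proof.
rewrite /moment.
under eq_integral => x _ do rewrite expr0.
rewrite integral_cst //. 
rewrite mul1e; exact: (congr1 fine (probability_setT P)).
Qed.

End Integ.

Section OPalg.
Variable R : realType.

Lemma OP0 alpha beta : OP alpha beta 0 = 1 :> {poly R}.
Proof. by []. Qed.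

Lemma OP1 alpha beta : OP alpha beta 1 = 'X - (alpha 1%N)%:P :> {poly R}.
Proof. by rewrite /OP /= scaler0 subr0 mulr1. Qed.

Lemma OPpairE alpha beta n : OPpair alpha beta n.+1 =
  (('X - (alpha n.+1)%:P) * (OPpair alpha beta n).1 - beta n *: (OPpair alpha beta n).2,
   (OPpair alpha beta n).1) :> {poly R} * {poly R}.
Proof. by rewrite /=; case: (OPpair alpha beta n). Qed.

Lemma OPS alpha beta n : OP alpha beta n.+2 =
  ('X - (alpha n.+2)%:P) * OP alpha beta n.+1 - beta n.+1 *: OP alpha beta n :> {poly R}.
Proof. by rewrite /OP (OPpairE _ _ n.+1) (OPpairE _ _ n). Qed.

Lemma UpairE (t : R) n : Upair t n.+1 =
  ('X * (Upair t n).1 - t *: (Upair t n).2, (Upair t n).1).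
Proof. by rewrite /=; case: (Upair t n). Qed.

Lemma US (t : R) n : Ucheb2 t n.+2 = 'X * Ucheb2 t n.+1 - t *: Ucheb2 t n.
Proof. by rewrite /Ucheb2 (UpairE _ n.+1) (UpairE _ n). Qed.

Lemma Ush0 (a b : R) : Ushift a b 0 = 1.
Proof. by rewrite /Ushift /Ucheb2 /= -polyC1 comp_polyC. Qed.

Lemma Ush1 (a b : R) : Ushift a b 1 = 'X - a%:P.
Proof. by rewrite /Ushift /Ucheb2 /= scaler0 subr0 mulr1 comp_polyX. Qed.

Lemma UshS (a b : R) n :
  Ushift a b n.+2 = ('X - a%:P) * Ushift a b n.+1 - b *: Ushift a b n.
Proof. by rewrite /Ushift US comp_polyB comp_polyM comp_polyZ comp_polyX. Qed.

Lemma part3 (alpha beta : nat -> R) (a a' b b' : R) :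
  (forall n : nat, (1 <= n)%N ->
     alpha n = a - (n == 1%N)%:R * a' /\ beta n = b - (n == 1%N)%:R * b') ->
  [/\ OP alpha beta 0 = Ushift a b 0,
      OP alpha beta 1 = Ushift a b 1 + a' *: Ushift a b 0 &
      forall n : nat, (1 < n)%N ->
        OP alpha beta n = Ushift a b n + a' *: Ushift a b n.-1
                          + b' *: Ushift a b n.-2].
Proof.
move=> h.
have al1 : alpha 1%N = a - a' by case: (h 1%N) => // -> _; rewrite mul1r.
have be1 : beta 1%N = b - b' by case: (h 1%N) => // _ ->; rewrite mul1r.
have alS : forall n, alpha n.+2 = a by move=> n; case: (h n.+2) => // -> _; rewrite mul0r subr0.
have beS : forall n, beta n.+2 = b by move=> n; case: (h n.+2) => // _ ->; rewrite mul0r subr0.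
split.
- by rewrite OP0 Ush0.
- by rewrite OP1 Ush1 Ush0 al1 -mul_polyC polyCB; ring.
have key : forall n, OP alpha beta n.+2 = Ushift a b n.+2 + a' *: Ushift a b n.+1
                          + b' *: Ushift a b n
               /\ OP alpha beta n.+3 = Ushift a b n.+3 + a' *: Ushift a b n.+2
                          + b' *: Ushift a b n.+1.
  elim=> [|n [IH1 IH2]].
    split.
      rewrite OPS OP1 OP0 alS be1 al1 !UshS Ush1 Ush0 -!mul_polyC !polyCB.
      ring.
    rewrite !OPS OP1 OP0 !alS beS be1 al1 !UshS Ush1 Ush0 -!mul_polyC !polyCB.
    ring.
  split; first exact: IH2.
  rewrite [OP _ _ n.+4]OPS alS beS IH1 IH2 !UshS -!mul_polyC.
  ring.
by case=> [|[|n]] // _; case: (key n).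
Qed.

Lemma coef_OPS alpha beta n j :
  (OP alpha beta n.+2)`_j.+1 = (OP alpha beta n.+1)`_j
     - alpha n.+2 * (OP alpha beta n.+1)`_j.+1 - beta n.+1 * (OP alpha beta n)`_j.+1 :> R.
Proof.
by rewrite OPS coefB coefZ mulrBl coefB coefXM coefCM.
Qed.

Lemma OP_deg alpha beta n :
  (forall j, (n < j)%N -> (OP alpha beta n)`_j = 0 :> R) /\ (OP alpha beta n)`_n = 1.
Proof.
have Q0 : (forall j, (0 < j)%N -> (OP alpha beta 0)`_j = 0 :> R) /\ (OP alpha beta 0)`_0 = 1.
  by split => [j j0|]; rewrite OP0 coef1 //; case: j j0.
have Q1 : (forall j, (1 < j)%N -> (OP alpha beta 1)`_j = 0 :> R) /\ (OP alpha beta 1)`_1 = 1.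
  split => [j j1|]; rewrite OP1 coefB coefX coefC //=; last by rewrite subr0.
  by case: j j1 => [|[|j]] //= _; rewrite subr0.
suff : forall n, ((forall j, (n < j)%N -> (OP alpha beta n)`_j = 0 :> R) /\ (OP alpha beta n)`_n = 1)
   /\ ((forall j, (n.+1 < j)%N -> (OP alpha beta n.+1)`_j = 0 :> R) /\ (OP alpha beta n.+1)`_n.+1 = 1).
  by move=> /(_ n) [].
elim=> [|k [[h1 l1] [h2 l2]]]; first by split.
split; first by split.
split.
  case=> [//|j] hj; rewrite coef_OPS h2 ?h1 ?h2 ?mulr0 ?subr0 //; lia.
by rewrite coef_OPS l2 h2 ?h1 ?mulr0 ?mulr1 ?subr0 //; lia.
Qed.

Lemma coef_PD (p : {poly R}) (c d : R) k :
  (p * (c%:P - d *: 'X))`_k.+1 = p`_k.+1 * c - d * p`_k.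
Proof. by rewrite mulrBr coefB coefMC -scalerAr coefZ coefMX. Qed.

Lemma sum3 (F : nat -> R) m :
  \sum_(i < m.+3) F i = \sum_(i < m) F i + F m + F m.+1 + F m.+2.
Proof. by rewrite !big_ord_recr /=. Qed.

Lemma sum4 (F : nat -> R) m :
  \sum_(i < m.+4) F i = \sum_(i < m) F i + F m + F m.+1 + F m.+2 + F m.+3.
Proof. by rewrite !big_ord_recr /=. Qed.

Lemma part1f (alpha beta : nat -> R) (u g : fps R) :
  u 0%N = 0 -> u 1%N = 1 -> g 0%N = 1 -> Hform (Hgen alpha beta) u g ->
  (forall m, alpha m.+2 = g 1%N - u 2%N) /\
  (forall m, beta m.+2 = g 2%N - u 3%N - u 2%N * (g 1%N - u 2%N)).
Proof.
move=> u0 u1 g0 hH.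
have hi : forall n j, (n < j)%N -> (OP alpha beta n)`_j = 0.
  by move=> n j; case: (OP_deg alpha beta n) => h _; apply: h.
have ld : forall n, (OP alpha beta n)`_n = 1.
  by move=> n; case: (OP_deg alpha beta n) => _ h; apply: h.
have E : forall n k, (n > 0)%N ->
    \sum_(i < n.+1) ((OP alpha beta i)`_k.+1 * g (n - i)%N - u (n - i)%N * (OP alpha beta i)`_k) = 0.
  move=> n k n0; have := congr1 (fun F : fps {poly R} => (F n)`_k.+1) hH.
  rewrite /= /smul coef_sum /sone; case: n n0 => // n _; rewrite /= coef0 => h; apply: (eq_trans _ h).
  by apply: eq_bigr => i _; rewrite coef_PD.
have s2 : forall m, (OP alpha beta m.+2)`_m.+1 = (OP alpha beta m.+1)`_m - alpha m.+2.
  by move=> m; rewrite coef_OPS ld (hi m m.+1) // mulr0 mulr1 subr0.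
have A : forall m, alpha m.+2 = g 1%N - u 2%N.
  move=> m; have := E m.+2 m isT; rewrite !big_ord_recr /= big1; last first.
    by move=> i _; rewrite !hi ?mulr0 ?mul0r ?subrr //; case: i => i /= hi'; lia.
  have -> : (m.+2 - m = 2)%N by lia.
  have -> : (m.+2 - m.+1 = 1)%N by lia.
  rewrite subnn u0 g0 u1 s2 !ld (hi m m.+1) //; lra.
split => // m.
have := E m.+3 m isT; rewrite !big_ord_recr /= big1; last first.
  by move=> i _; rewrite !hi ?mulr0 ?mul0r ?subrr //; case: i => i /= hi'; lia.
have -> : (m.+3 - m = 3)%N by lia.
have -> : (m.+3 - m.+1 = 2)%N by lia.
have -> : (m.+3 - m.+2 = 1)%N by lia.
rewrite subnn u0 g0 u1 (coef_OPS _ _ m.+1 m) !s2 !ld (hi m m.+1) // !A.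
set L := (X in X = 0) => h.
rewrite -[beta m.+2]addr0 -{1}h /L; ring.
Qed.

End OPalg.

Section Back.
Variable R : realType.

Lemma sinv0 (K : comNzRingType) (p : fps K) : p 0%N = 1 -> sinv p 0%N = 1.
Proof.
move=> p0; have := congr1 (fun f : fps K => f 0%N) (sinvP p0).
by rewrite /= mulE big_ord1 p0 mulr1.
Qed.

Lemma part1b (alpha beta : nat -> R) (a a' b b' : R) :
  (forall n : nat, (1 <= n)%N ->
     alpha n = a - (n == 1%N)%:R * a' /\ beta n = b - (n == 1%N)%:R * b') ->
  exists u g : fps R,
      [/\ u 0%N = 0, u 1%N = 1, g 0%N = 1 & Hform (Hgen alpha beta) u g].
Proof.
move=> h; have [P0 P1 Pn] := part3 h.
pose Nr : fps R := 1 + sX R * sC a' + sX R * (sX R * sC b').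
have Nr0 : Nr 0%N = 1.
  by rewrite /Nr !addE !sXM oneE /= !addr0.
pose w := sinv Nr.
have wN : w * Nr = 1 by apply: sinvP.
have w0 : w 0%N = 1 by apply: sinv0.
pose Ga : fps R := 1 + sX R * sC a + sX R * (sX R * sC b).
exists (sX R * w), (Ga * w); split.
- by rewrite sXM.
- by rewrite sXM /= w0.
- by rewrite mulE big_ord1 /Ga !addE !sXM /= w0 oneE /= !addr0 mulr1.
pose Qs : fps {poly R} := fun n => Ushift a b n.
pose Dq : fps {poly R} := 1 - sX _ * sC ('X - a%:P) + sX _ * (sX _ * sC b%:P).
pose Np : fps {poly R} := 1 + sX _ * sC a'%:P + sX _ * (sX _ * sC b'%:P).
pose wp : fps {poly R} := fun n => (w n)%:P.
have i1 : Qs * Dq = 1.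
  have -> : Qs * Dq = Qs - sX _ * (sC ('X - a%:P) * Qs) + sX _ * (sX _ * (sC b%:P * Qs)).
    by rewrite /Dq; ring.
  apply: funext => -[|[|n]]; rewrite !(addE, oppE) !sXM /= ?sCM /Qs oneE /=.
  - by rewrite Ush0 oppr0 !addr0.
  - by rewrite Ush0 Ush1 addr0 mulr1 subrr.
  - by rewrite UshS -mul_polyC; ring.
have i2 : Hgen alpha beta = Qs * Np.
  have -> : Qs * Np = Qs + sX _ * (sC a'%:P * Qs) + sX _ * (sX _ * (sC b'%:P * Qs)).
    by rewrite /Np; ring.
  apply: funext => -[|[|n]]; rewrite !addE !sXM /= ?sCM /Qs /Hgen /=.
  - by rewrite P0 !addr0.
  - by rewrite P1 addr0 mul_polyC.
  - by rewrite Pn // !mul_polyC.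
have i3 : (fun n => ((Ga * w) n)%:P - (sX R * w) n *: 'X) = Dq * wp.
  have -> : Dq * wp = wp - sX _ * (sC ('X - a%:P) * wp) + sX _ * (sX _ * (sC b%:P * wp)).
    by rewrite /Dq; ring.
  have -> : Ga * w = w + sX _ * (sC a * w) + sX _ * (sX _ * (sC b * w)).
    by rewrite /Ga; ring.
  apply: funext => -[|[|n]]; rewrite !(addE, oppE) !sXM /= ?sCM /wp /=.
  - by rewrite scale0r !addr0 !subr0.
  - by rewrite !addr0 -!mul_polyC !polyCD !polyCM; ring.
  - by rewrite -!mul_polyC !polyCD !polyCM; ring.
have i4 : Np * wp = 1.
  have -> : Np * wp = smap (@polyC R) (Nr * w).
    rewrite smapM; congr (_ * _); apply: funext => -[|[|[|n]]];
      by rewrite /Np /Nr /smap !addE !sXM /= !oneE /= !(addr0, add0r) ?polyC1 ?polyC0.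
  by rewrite mulrC wN smap1.
rewrite /Hform; change (Hgen alpha beta * (fun n => ((Ga * w) n)%:P - (sX R * w) n *: 'X) = 1).
rewrite i3 i2.
have -> : Qs * Np * (Dq * wp) = (Qs * Dq) * (Np * wp) by ring.
by rewrite i1 i4 mulr1.
Qed.

End Back.

Section Two.
Variable R : realType.

Section LL.
Variable m : nat -> R.
Definition LL (p : {poly R}) : R := \sum_(i < size p) p`_i * m i.

Lemma LL_wid N (p : {poly R}) : (size p <= N)%N -> LL p = \sum_(i < N) p`_i * m i.
Proof.
move=> hN; rewrite /LL (big_ord_widen N (fun i => p`_i * m i) hN) big_mkcond.
apply: eq_bigr => i _; case: ifP => // hi.
by rewrite nth_default ?mul0r // leqNgt hi.
Qed.

Lemma LL_add (p q : {poly R}) : LL (p + q) = LL p + LL q.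
Proof.
pose N := maxn (size p) (size q).
rewrite (@LL_wid N (p + q)) ?(@LL_wid N p) ?(@LL_wid N q) ?leq_maxl ?leq_maxr //.
  by rewrite -big_split; apply: eq_bigr => i _; rewrite coefD mulrDl.
exact: size_add.
Qed.

Lemma LL_scale c (p : {poly R}) : LL (c *: p) = c * LL p.
Proof.
rewrite (@LL_wid (size p) (c *: p)) ?size_scale_leq // /LL mulr_sumr.
by apply: eq_bigr => i _; rewrite coefZ mulrA.
Qed.

Lemma LL0 : LL 0 = 0.
Proof. by rewrite /LL size_poly0 big_ord0. Qed.

Lemma LL_sum n (F : 'I_n -> {poly R}) : LL (\sum_(i < n) F i) = \sum_(i < n) LL (F i).
Proof.
by elim/big_rec2: _ => [|i x y _ <-]; rewrite ?LL0 ?LL_add.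
Qed.

Lemma LL_Xn k : LL 'X^k = m k.
Proof.
rewrite (@LL_wid k.+1) ?size_polyXn // big_ord_recr /= coefXn eqxx mul1r big1 ?add0r //.
by move=> [i hi] _ /=; rewrite coefXn; case: eqP => [e|]; [lia | rewrite mul0r].
Qed.

End LL.

Lemma sum_coef (K : comNzRingType) n (F : 'I_n -> fps K) j :
  (\sum_(k < n) F k) j = \sum_(k < n) F k j.
Proof.
by elim/big_rec2: _ => // i x y _ <-.
Qed.

Lemma Ghat_t (alpha beta : nat -> R) (m : nat -> R) (u g : fps R) :
  m 0%N = 1 ->
  (forall n, (0 < n)%N -> LL m (OP alpha beta n) = 0) ->
  u 0%N = 0 -> g 0%N = 1 -> Hform (Hgen alpha beta) u g ->
  scomp (Ghat m) (u * sinv g) = u.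
Proof.
move=> m0 horth u0 g0 hH.
pose Y k : fps R := fun n => LL m ('X^k * OP alpha beta n).
have Y0 : Y 0%N = 1.
  apply: funext => -[|n]; rewrite /Y expr0 mul1r oneE /=.
    by rewrite OP0 -(expr0 'X) LL_Xn.
  exact: horth.
have I : forall k, Y k * g - Y k.+1 * u = sC (m k).
  move=> k; apply: funext => n.
  have := congr1 (fun F : fps {poly R} => LL m ('X^k * F n)) hH.
  rewrite /= /smul mulr_sumr LL_sum /sone mulr_natr.
  have -> : LL m ('X^k *+ (n == 0%N)) = if n is 0%N then m k else 0.
    by case: n => [|n]; rewrite ?mulr1n ?mulr0n ?LL_Xn ?LL0.
  move=> e; rewrite subE /sC -{}e mulE mulE -sumrB.
  apply: eq_bigr => i _.
  have -> : 'X^k * (Hgen alpha beta i * ((g (n - i)%N)%:P - u (n - i)%N *: 'X)) =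
     (g (n - i)%N) *: ('X^k * OP alpha beta i) + (- u (n - i)%N) *: ('X^(k.+1) * OP alpha beta i).
    by rewrite /Hgen -!mul_polyC exprS polyCN; ring.
  by rewrite LL_add !LL_scale /Y; ring.
pose gi := sinv g.
have gig : gi * g = 1 by apply: sinvP.
pose t := u * gi.
have t0 : t 0%N = 0 by rewrite /t mulE big_ord1 u0 mul0r.
have J : forall k, Y k = Y k.+1 * t + sC (m k) * gi.
  move=> k; rewrite -(I k) /t.
  have e1 : Y k = Y k * (gi * g) by rewrite gig mulr1.
  by rewrite {1}e1; ring.
have T : forall K, 1 = \sum_(k < K) sC (m k) * gi * t ^+ k + Y K * t ^+ K.
  elim=> [|K IH]; first by rewrite big_ord0 add0r expr0 mulr1 Y0.
  by rewrite big_ord_recr /= {1}IH (J K) exprS; ring.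
have U : forall K, u = \sum_(k < K) sC (m k) * t ^+ k.+1 + u * Y K * t ^+ K.
  move=> K; rewrite -{1}[u]mulr1 (T K) mulrDr mulr_sumr mulrA; congr (_ + _).
  by apply: eq_bigr => k _; rewrite /t exprS; ring.
have t1 : ordge t 1 by move=> j; case: j.
apply: funext => n.
symmetry; rewrite {1}(U n.+1) addE sum_coef.
rewrite [X in _ + X = _](_ : _ = 0); last first.
  apply: (ordgeM (p := 0%N) (q := n.+1)) => //; exact: ordge_exp.
rewrite addr0 big_ord_recr /scomp big_ord_recl /=.
rewrite sCM (ordge_exp (k := n.+1) t1) // mulr0 addr0.
rewrite mul0r add0r; apply: eq_bigr => k _; rewrite sCM add0n.
by rewrite spowE exprS.
Qed.

Lemma exK (m : nat -> R) : m 0%N = 1 -> exists c, is_Kcoeffs m c.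
Proof.
move=> m0.
have G0 : Ghat m 0%N = 0 by [].
have G1 : Ghat m 1%N = 1 by [].
pose v := rinv (Ghat m).
have hv := rinvP G0 G1.
pose psi : fps R := fun n => v n.+1.
have svp : sX R * psi = v.
  rewrite sXM; apply: funext => -[|n] //.
  by rewrite /v (rinv0 (Ghat m)).
have psi0 : psi 0%N = 1 by rewrite /psi /v rinvE /rinvstep big_ord0 subr0.
exists (sinv psi), psi; split.
  have -> : kser (sinv psi) = sinv psi.
    by apply: funext => -[|n] //=; rewrite sinv0.
  by rewrite [smul _ _]/=; exact: sinvP.
by change (scomp (Ghat m) (sX R * psi) = sX R); rewrite svp.
Qed.

Lemma part2b (m : nat -> R) (u g : fps R) (c : nat -> R) :
  u 0%N = 0 -> u 1%N = 1 -> g 0%N = 1 ->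
  scomp (Ghat m) (u * sinv g) = u ->
  is_Kcoeffs m c -> g = scomp (kser c) u.
Proof.
move=> u0 u1 g0 hG [psi [h1 h2]].
change (kser c * psi = 1) in h1.
change (scomp (Ghat m) (sX R * psi) = sX R) in h2.
pose gi := sinv g.
have gig : gi * g = 1 by apply: sinvP.
pose t := u * gi.
have t0 : t 0%N = 0 by rewrite /t mulE big_ord1 u0 mul0r.
have psi0 : psi 0%N = 1.
  by have := congr1 (fun f : fps R => f 0%N) h1; rewrite /= mulE big_ord1 /= mul1r.
pose w := sX R * psi.
have w0 : w 0%N = 0 by rewrite /w sXM.
have w1 : w 1%N = 1 by rewrite /w sXM.
pose v := rinv w.
have hv : scomp w v = sX R by apply: rinvP.
have v0 : v 0%N = 0 by apply: rinv0.
have G0 : Ghat m 0%N = 0 by [].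
have Gv : Ghat m = v.
  by rewrite -[Ghat m]scomp_X -hv -scompA // h2 scompX.
have wG : scomp w (Ghat m) = sX R by rewrite Gv.
have tw : t = scomp w u.
  by rewrite -[t]scompX // -wG scompA // hG.
have e : u * gi = u * scomp psi u.
  by rewrite -/t tw /w scompM // scompX.
pose u' : fps R := fun n => u n.+1.
have uu' : u = sX R * u' by rewrite sXM; apply: funext => -[|n] //=.
have u'0 : u' 0%N = 1 by [].
have ui := sinvP u'0.
have e2 : gi = scomp psi u.
  move: e; rewrite uu' -!mulrA => /sX_cancel e.
  by rewrite -[gi]mul1r -ui -mulrA e mulrA [sinv u' * u']ui mul1r.
rewrite -[g]mulr1 -(scomp1 u0) -h1 scompM // -e2.
have -> : g * (scomp (kser c) u * gi) = (gi * g) * scomp (kser c) u by ring.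
by rewrite gig mul1r.
Qed.

End Two.

Unset Implicit Arguments. Set Strict Implicit. Set Printing Implicit Defensive.

Theorem lemma3p1 (R : realType) (P : probability R R)
  (alpha beta : nat -> R)
  (hmom : forall n : nat, P.-integrable [set: R] (fun x => (x ^+ n)%:E))
  (hbeta : forall n : nat, 0 <= beta n)
  (horth : forall n k : nat, n <> k ->
     (\int[P]_x (((OP alpha beta n).[x] * (OP alpha beta k).[x])%:E) = 0)%E) :
  (* (1) *)
  ((exists u g : fps R,
      [/\ u 0%N = 0, u 1%N = 1, g 0%N = 1 & Hform (Hgen alpha beta) u g])
   <->
   (exists a a' b b' : R,
      [/\ 0 <= b, 0 <= b - b' &
          forall n : nat, (1 <= n)%N ->
            alpha n = a - (n == 1%N)%:R * a' /\ beta n = b - (n == 1%N)%:R * b']))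
  /\
  (* (2) f = K_nu o u, i.e. u f = u (K_nu o u) = kser c o u *)
  (forall u g : fps R,
      u 0%N = 0 -> u 1%N = 1 -> g 0%N = 1 -> Hform (Hgen alpha beta) u g ->
      (exists c, is_Kcoeffs (moment P) c) /\
      (forall c, is_Kcoeffs (moment P) c -> g = scomp (kser c) u))
  /\
  (* (3) *)
  (forall a a' b b' : R,
      0 <= b -> 0 <= b - b' ->
      (forall n : nat, (1 <= n)%N ->
         alpha n = a - (n == 1%N)%:R * a' /\ beta n = b - (n == 1%N)%:R * b') ->
      [/\ OP alpha beta 0 = Ushift a b 0,
          OP alpha beta 1 = Ushift a b 1 + a' *: Ushift a b 0 &
          forall n : nat, (1 < n)%N ->
            OP alpha beta n = Ushift a b n + a' *: Ushift a b n.-1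
                              + b' *: Ushift a b n.-2]).
Proof.
have m0 : moment P 0 = 1 := moment0 P.
have hL : forall n, (0 < n)%N -> LL (moment P) (OP alpha beta n) = 0.
  move=> n n0.
  have hn : n <> 0%N by move=> e; rewrite e in n0.
  have := horth n 0%N hn.
  under eq_integral => x _ do rewrite OP0 -polyC1 hornerC mulr1.
  by rewrite int_poly // => -[].
split; [split|split].
- move=> [u [g [u0 u1 g0 hH]]]; have [A B] := part1f u0 u1 g0 hH.
  exists (g 1%N - u 2%N), (g 1%N - u 2%N - alpha 1%N),
    (g 2%N - u 3%N - u 2%N * (g 1%N - u 2%N)),
    (g 2%N - u 3%N - u 2%N * (g 1%N - u 2%N) - beta 1%N); split.
  + by rewrite -(B 0%N); exact: hbeta.
  + by rewrite opprB addrCA subrr addr0; exact: hbeta.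
  + case=> [//|[|n]] _.
      by rewrite /= mul1r; split; ring.
    by rewrite A B /=; split; ring.
- by move=> [a [a' [b [b' [_ _ h]]]]]; exact: part1b h.
- move=> u g u0 u1 g0 hH; split; first exact: exK m0.
  move=> c hc; apply: (part2b u0 u1 g0 _ hc).
  exact: Ghat_t m0 hL u0 g0 hH.
- by move=> a a' b b' _ _ h; exact: part3 h.
Qed.
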